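(* Let $Y$ be a closed subspace of real Banach spaces $Z$ and $W$, and let $\beta=\mathrm{dens}(Z/Y)$. Suppose the dual unit ball $B(W^* )$, with its weak$^*$ topology, contains a family $\{B_\alpha\}_{\alpha<\beta}$ of pairwise disjoint second category sets such that $B'=\bigcup_{\alpha<\beta}B_\alpha$ satisfies $B'\cap(-B')=\emptyset$. Then there is an isomorphic embedding $E:Z\to m_0(B(W^* ))$ which on $Y$ coincides with the natural embedding $y\mapsto[\,w^*\mapsto w^*(y)\,]$.
   Context: $\mathrm{dens}(V)$ is the density character of a Banach space $V$ (the minimal cardinality of a dense subset). For a compact Hausdorff space $K$: $\ell_\infty(K)$ is the space of bounded real functions on $K$ with the sup norm; $m(K)=\{f\in\ell_\infty(K): \mathrm{supp}(f)\text{ is a first category set in }K\}$; $m_0(K)=\ell_\infty(K)/m(K)$ with the quotient norm, and $[f]$ denotes the class of $f$. Here $K=B(W^* )$ with the weak$^*$ topology. *)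

(* Defs.v *)
From HB Require Import structures.
From mathcomp Require Import all_boot all_order all_algebra.
From mathcomp Require Import all_classical all_reals all_analysis.
Set Implicit Arguments. Unset Strict Implicit. Unset Printing Implicit Defensive.
Import Order.TTheory GRing.Theory Num.Theory.
Import numFieldNormedType.Exports.
Local Open Scope classical_set_scope.
Local Open Scope ring_scope.

Section Defs.
Variable R : realType.

Section Dual.
Variable W : normedModType R.

(* B(W^* ): linear functionals of norm <= 1 (these are automatically
   continuous), represented as functions W -> R. *)
Definition dual_ball : set (W -> R) :=
  [set f | (forall (a : R) (u v : W), f (a *: u + v) = a * f u + f v) /\
           (forall w : W, `|f w| <= `|w|)].

Definition wstar_open (U : set (W -> R)) : Prop :=
  U `<=` dual_ball /\
  forall f, U f -> exists (S : set W) (e : R), finite_set S /\ 0 < e /\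
     [set g | dual_ball g /\ forall w, S w -> `|g w - f w| < e] `<=` U.

Definition wstar_closure (A : set (W -> R)) : set (W -> R) :=
  [set f | dual_ball f /\ forall U, wstar_open U -> U f -> U `&` A !=set0].

Definition wstar_interior (A : set (W -> R)) : set (W -> R) :=
  [set f | exists U, wstar_open U /\ U f /\ U `<=` A].

Definition wstar_nowhere_dense (A : set (W -> R)) : Prop :=
  A `<=` dual_ball /\ wstar_interior (wstar_closure A) = set0.

Definition wstar_first_category (A : set (W -> R)) : Prop :=
  A `<=` dual_ball /\
  exists An : nat -> set (W -> R),
    (forall n, wstar_nowhere_dense (An n)) /\ A `<=` \bigcup_n An n.

Definition wstar_second_category (A : set (W -> R)) : Prop :=
  A `<=` dual_ball /\ ~ wstar_first_category A.

(* elements of l_oo(K) are represented by functions (W -> R) -> R;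
   only their values on K = dual_ball matter. *)
Definition Kbounded (f : (W -> R) -> R) : Prop :=
  exists M : R, forall k, dual_ball k -> `|f k| <= M.

Definition Ksupport (f : (W -> R) -> R) : set (W -> R) :=
  [set k | dual_ball k /\ f k != 0].

Definition mK (f : (W -> R) -> R) : Prop :=
  Kbounded f /\ wstar_first_category (Ksupport f).

Definition Ksupnorm (f : (W -> R) -> R) : R :=
  sup [set `|f k| | k in dual_ball].

(* quotient norm of the class [f] in m_0(K) = l_oo(K)/m(K) *)
Definition m0norm (f : (W -> R) -> R) : R :=
  inf [set Ksupnorm (f \- g) | g in mK].

End Dual.

Section Quot.
Variables (Y Z : normedModType R) (iZ : Y -> Z).

Definition quot_norm (z : Z) : R := inf [set `|z - iZ y| | y in [set: Y]].

Definition quot_dense (D : set Z) : Prop :=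
  forall (z : Z) (e : R), 0 < e -> exists2 d, D d & quot_norm (z - d) < e.

(* D is a dense subset of Z/Y of minimal cardinality, i.e.
   #D = dens(Z/Y). *)
Definition quot_dens_witness (D : set Z) : Prop :=
  quot_dense D /\ forall D' : set Z, quot_dense D' -> (D #<= D')%card.
End Quot.

End Defs.

(* Main.v *)
Require Import Defs.
From HB Require Import structures.
From mathcomp Require Import all_boot all_order all_algebra.
From mathcomp Require Import all_classical all_reals all_analysis.
Import Order.TTheory GRing.Theory Num.Theory.
Import numFieldNormedType.Exports.
Local Open Scope classical_set_scope.
Local Open Scope ring_scope.
From mathcomp.algebra_tactics Require Import ring lra.

Section HBsec.
Variable R : realType.
Variable Z : normedModType R.

Definition goodG (G : set (Z * R)) :=
  [/\ G (0,0),
   (forall a z1 r1 z2 r2, G (z1, r1) -> G (z2, r2) -> G (a *: z1 + z2, a * r1 + r2)),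
   (forall z r r', G (z,r) -> G (z,r') -> r = r') &
   (forall z r, G (z,r) -> r <= `|z|)].

Lemma goodG_ext (G : set (Z * R)) (z0 : Z) : goodG G -> (forall r, ~ G (z0, r)) ->
  exists G', goodG G' /\ G `<` G'.
Proof.
case=> G0 Gcl Gfun Gdom Hz0.
pose S := [set x | exists z r, G (z, r) /\ x = r - `|z - z0| ].
have S0 : S !=set0 by exists (0 - `|0 - z0|); exists 0, 0.
have Sub : forall z' r', G (z', r') -> ubound S (`|z' + z0| - r').
  move=> z' r' Gz' _ [z [r [Gz ->]]].
  have := Gdom _ _ (Gcl 1 _ _ _ _ Gz Gz'); rewrite !scale1r !mul1r => h.
  rewrite lerBrDr addrAC lerBlDr (le_trans h) //.
  rewrite (_ : z + z' = (z' + z0) + (z - z0)); first exact: ler_normD.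
  by rewrite [RHS]addrC addrA addrAC subrK.
have hS : has_ubound S by exists (`|0 + z0| - 0); exact: (Sub _ _ G0).
pose c := sup S.
have cle : forall z' r', G (z', r') -> c <= `|z' + z0| - r'.
  by move=> z' r' Gz'; apply: ge_sup => //; exact: Sub.
have cge : forall z r, G (z, r) -> r - `|z - z0| <= c.
  by move=> z r Gz; apply: ub_le_sup => //; exists z, r.
pose G' := [set p | exists z r t, G (z, r) /\ p = (z + t *: z0, r + t * c)].
have Gsc : forall a z r, G (z, r) -> G (a *: z, a * r).
  by move=> a z r Gz; have := Gcl a _ _ _ _ Gz G0; rewrite !addr0.
exists G'; split; last first.
  split.
    by move=> [z r] Gz; exists z, r, 0; rewrite scale0r mul0r !addr0.
  move=> sub; apply: (Hz0 c).
  have : G' (z0, c) by exists 0, 0, 1; rewrite scale1r mul1r !add0r.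
  by move/sub.
split.
- by exists 0, 0, 0; rewrite scale0r mul0r !addr0.
- move=> a _ _ _ _ [z1 [r1 [t1 [G1 [-> ->]]]]] [z2 [r2 [t2 [G2 [-> ->]]]]].
  exists (a *: z1 + z2), (a * r1 + r2), (a * t1 + t2); split; first exact: Gcl.
  congr pair.
    by rewrite scalerDr scalerDl scalerA; rewrite !addrA; congr (_ + _); rewrite addrAC.
  by rewrite mulrDr mulrDl mulrA !addrA; congr (_ + _); rewrite addrAC.
- move=> z r r' [z1 [r1 [t1 [G1 E1]]]] [z2 [r2 [t2 [G2 E2]]]].
  case: E1 => Ez1 Er1; case: E2 => Ez2 Er2.
  rewrite Er1 Er2; rewrite Ez1 in Ez2; move: Ez2 => e.
  have [et|t12] := eqVneq t1 t2.
    rewrite et in e *; move: e => /(congr1 (fun x => x - t2 *: z0)); rewrite !addrK => ez.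
    by rewrite ez in G1; rewrite (Gfun _ _ _ G1 G2).
  exfalso.
  have G21 := Gcl (-1) _ _ _ _ G1 G2.
  have := Gsc ((t1 - t2)^-1) _ _ G21.
  have -> : (t1 - t2)^-1 *: (-1 *: z1 + z2) = z0.
    have -> : -1 *: z1 + z2 = (t1 - t2) *: z0.
      rewrite scaleN1r scalerBl; apply/eqP; rewrite addrC subr_eq addrAC eq_sym subr_eq addrC e.
      by rewrite addrC.
    by rewrite scalerA mulVf ?scale1r // subr_eq0.
  exact: Hz0.
- move=> _ _ [z [r [t [Gz [-> ->]]]]].
  have [t0|t0|->] := ltgtP t 0; last first.
  + by rewrite scale0r mul0r !addr0; exact: Gdom.
  + have Gt := Gsc (t^-1) _ _ Gz.
    have h := ler_wpM2l (ltW t0) (cle _ _ Gt).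
    rewrite mulrBr mulrA mulfV ?gt_eqF // mul1r in h.
    have e1 : `|z + t *: z0| = t * `|t^-1 *: z + z0|.
      rewrite -[t in t * _]gtr0_norm // -normrZ scalerDr scalerA mulfV ?gt_eqF //.
      by rewrite scale1r.
    rewrite e1; lra.
  + set s := - t; have s0 : 0 < s by rewrite oppr_gt0.
    have Gt := Gsc (s^-1) _ _ Gz.
    have h := ler_wpM2l (ltW s0) (cge _ _ Gt).
    rewrite mulrBr mulrA mulfV ?gt_eqF // mul1r in h.
    have e1 : `|z + t *: z0| = s * `|s^-1 *: z - z0|.
      rewrite -[s in s * _]gtr0_norm // -normrZ scalerBr scalerA mulfV ?gt_eqF //.
      by rewrite scale1r /s scaleNr opprK.
    rewrite e1 (_ : t = - s); last by rewrite opprK.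
    lra.
Qed.


Lemma HahnBanach (V : lmodType R) (T : V -> Z) (g : V -> R) :
  (forall a u v, T (a *: u + v) = a *: T u + T v) ->
  (forall a u v, g (a *: u + v) = a * g u + g v) ->
  (forall v, g v <= `|T v|) ->
  exists L : Z -> R, (forall a u v, L (a *: u + v) = a * L u + L v) /\
    (forall v, L (T v) = g v) /\ (forall z, `|L z| <= `|z|).
Proof.
move=> Tlin glin gdom.
have T0 : T 0 = 0.
  have := Tlin 1 0 0; rewrite scale1r addr0 => /(congr1 (fun x => x - T 0)).
  by rewrite subrr addrK scale1r => /esym.
have g0 : g 0 = 0.
  have := glin 1 0 0; rewrite scale1r addr0 mul1r => /(congr1 (fun x => x - g 0)).
  by rewrite subrr addrK => /esym.
pose B0 := [set p | exists v, p = (T v, g v)].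
have gB0 : goodG B0.
  split.
  - by exists 0; rewrite T0 g0.
  - move=> a _ _ _ _ [v1 [-> ->]] [v2 [-> ->]].
    by exists (a *: v1 + v2); rewrite Tlin glin.
  - move=> _ _ _ [v1 [-> ->]] [v2 [e ->]].
    have h1 := gdom ((-1) *: v2 + v1); have h2 := gdom ((-1) *: v1 + v2).
    rewrite Tlin glin e scaleN1r addNr normr0 in h1.
    rewrite Tlin glin e scaleN1r addNr normr0 in h2.
    lra.
  - by move=> _ _ [v [-> ->]]; exact: gdom.
pose P := [set G | G = set0 \/ (goodG G /\ B0 `<=` G)].
have [A [PA Amax]] : exists A, P A /\ forall B, A `<` B -> ~ P B.
  apply: Zorn_bigcup => F FP Ftot.
  have [U0|[X0 FX0 [x X0x]]] : (\bigcup_(X in F) X) = set0 \/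
       exists2 X0, F X0 & X0 !=set0.
    have [h|h] := pselect (exists2 X0, F X0 & X0 !=set0); [by right|left].
    apply/seteqP; split => // x [X FX Xx]; apply: h; exists X => //; by exists x.
    by left.
  right.
  have goodne : forall X, F X -> X !=set0 -> goodG X /\ B0 `<=` X.
    by move=> X FX [y Xy]; case: (FP X FX) => // eX; rewrite eX in Xy.
  have big2 : forall X1 X2, F X1 -> F X2 -> exists2 X, F X & X1 `<=` X /\ X2 `<=` X.
    move=> X1 X2 F1 F2; case: (Ftot X1 X2 F1 F2) => h.
      by exists X2 => //; split => //; exact: subset_refl.
    by exists X1 => //; split => //; exact: subset_refl.
  split; last first.
    by move=> p Bp; exists X0 => //; apply: (proj2 (goodne _ FX0 _)) => //; exists x.
  have [[G0 Gcl Gfun Gdom] _] := goodne _ FX0 (ex_intro _ x X0x).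
  split.
  - by exists X0.
  - move=> a z1 r1 z2 r2 [X1 F1 X1p] [X2 F2 X2p].
    have [X FX [s1 s2]] := big2 _ _ F1 F2.
    have [[_ cl _ _] _] := goodne _ FX (ex_intro _ _ (s1 _ X1p)).
    by exists X => //; apply: cl; [apply: s1|apply: s2].
  - move=> z r r' [X1 F1 X1p] [X2 F2 X2p].
    have [X FX [s1 s2]] := big2 _ _ F1 F2.
    have [[_ _ fn _] _] := goodne _ FX (ex_intro _ _ (s1 _ X1p)).
    exact: (fn z r r' (s1 _ X1p) (s2 _ X2p)).
  - move=> z r [X FX Xp].
    have [[_ _ _ dm] _] := goodne _ FX (ex_intro _ _ Xp).
    exact: dm.
have [A0|[gA B0A]] := PA.
  exfalso; apply: (Amax B0); last by right; split => //; exact: subset_refl.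
  rewrite A0; split; first exact: sub0set.
  move=> h; have : B0 (T 0, g 0) by exists 0.
  by move/h.
have Aall : forall z, exists r, A (z, r).
  move=> z; apply/not_existsP => hz.
  have [G' [gG' AG']] := goodG_ext _ _ gA hz.
  apply: (Amax G' AG'); rewrite /P /=; right; split => //.
  by apply: subset_trans B0A _; case: AG'.
have [L HL] := choice Aall.
case: gA => A0 Acl Afun Adom.
exists L; split; [|split].
- by move=> a u v; apply: (Afun (a *: u + v)) => //; apply: Acl.
- by move=> v; apply: (Afun (T v)) => //; apply: B0A; exists v.
- move=> z; rewrite ler_norml; apply/andP; split; last exact: Adom.
  have := Adom _ _ (Acl (-1) _ _ _ _ (HL z) A0).
  by rewrite scaleN1r addr0 addr0 normrN mulN1r lerNl.
Qed.

End HBsec.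


Section Top.
Variable R : realType.
Variable W : normedModType R.
Import ArrowAsProduct.
Local Notation PT := (W -> R).

Lemma ev_cont (w : W) : continuous (fun f : PT => f w).
Proof. exact: (@proj_continuous W (fun _ => R) w). Qed.

Definition Box : set PT := [set f | forall w, `[- `|w|, `|w|]%classic (f w)].

Lemma Box_compact : compact Box.
Proof. exact: (@tychonoff W (fun _ => R) (fun w => `[- `|w|, `|w|]%classic) (fun w => @segment_compact R _ _)). Qed.

Lemma nested_pt (C : nat -> set PT) : (forall n, closed (C n)) ->
  (forall n, C n.+1 `<=` C n) -> (forall n, C n !=set0) ->
  (forall n, C n `<=` Box) -> exists p, forall n, C n p.
Proof.
move=> Ccl Cdec Cne CB.
have Cmono : forall n m, (n <= m)%N -> C m `<=` C n.
  move=> n m /subnK <-; elim: (m - n)%N => [|k IH]; first by rewrite add0n.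
  by rewrite addSn; apply: subset_trans (Cdec _) IH.
pose F := filter_from setT C.
have FF : ProperFilter F.
  apply: filter_from_proper; last by move=> i _; exact: Cne.
  apply: filter_from_filter; first by exists 0%N.
  move=> i j _ _; exists (maxn i j) => //.
  by move=> x Cx; split; apply: (Cmono _ (maxn i j)) => //; rewrite ?leq_maxl ?leq_maxr.
have FB : F Box by exists 0%N => //; exact: CB.
have [p [_ clp]] := @Box_compact F FF FB.
exists p => n; apply: Ccl => B nB.
have := clp (C n) B; apply => //; by exists n.
Qed.


Lemma closed_normle (c : R) : closed [set x : R | `|x| <= c].
Proof.
have := (proj1 (continuous_closedP _) (@norm_continuous _ R^o)) _ (@closed_le R c).
by [].
Qed.

Lemma closed_ev (w : W) (A : set R) : closed A -> closed [set f : PT | A (f w)].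
Proof. by move=> cA; move: (ev_cont w) => /continuous_closedP; apply. Qed.

Lemma closed_lin a u v : closed [set f : PT | f (a *: u + v) = a * f u + f v].
Proof.
have hc : continuous (fun f : PT => f (a *: u + v) - (a * f u + f v)).
  move=> f; apply: (@continuousB _ _ _ (fun f : PT => f (a *: u + v)) (fun f => a * f u + f v)).
    exact: ev_cont.
  apply: (@continuousD _ _ _ (fun f : PT => a * f u) (fun f : PT => f v)); last exact: ev_cont.
  apply: (@continuousM _ _ (fun _ : PT => a) (fun f : PT => f u)); last exact: ev_cont.
  exact: cst_continuous.
have := (proj1 (continuous_closedP _) hc) _ (@closed_eq R 0).
congr closed; apply/seteqP; split => f /=; first by move/eqP; rewrite subr_eq0 => /eqP.
by move=> ->; rewrite subrr.
Qed.

Lemma ballE : (@dual_ball R W : set PT) =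
  \bigcap_(t in [set: R * W * W]) [set f : PT | f (t.1.1 *: t.1.2 + t.2) = t.1.1 * f t.1.2 + f t.2]
  `&` \bigcap_(w in [set: W]) [set f : PT | `|f w| <= `|w|].
Proof.
apply/seteqP; split => f.
  by case=> h1 h2; split => [[[a u] v]|w] _ /=; [exact: h1|exact: h2].
by case=> h1 h2; split => [a u v|w]; [exact: (h1 (a, u, v))|exact: h2].
Qed.

Lemma closed_dual_ball : closed (@dual_ball R W : set PT).
Proof.
rewrite ballE; apply: closedI.
  by apply: closed_bigI => [[[a u] v]] _; exact: closed_lin.
apply: closed_bigI => w _.
exact: (closed_ev w [set x | `|x| <= `|w|] (closed_normle _)).
Qed.


Definition Nbd (f : W -> R) (S : set W) (e : R) : set (W -> R) :=
  [set g | dual_ball g /\ forall w, S w -> `|g w - f w| < e].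
Definition Ncl (f : W -> R) (S : set W) (e : R) : set (W -> R) :=
  [set g | dual_ball g /\ forall w, S w -> `|g w - f w| <= e].

Lemma closed_shift (w : W) (c e : R) : closed [set g : PT | `|g w - c| <= e].
Proof.
have hc : continuous (fun g : PT => g w - c).
  move=> g; apply: (@continuousB _ _ _ (fun f : PT => f w) (fun _ => c)).
    exact: ev_cont.
  exact: cst_continuous.
exact: ((proj1 (continuous_closedP _) hc) _ (closed_normle e)).
Qed.

Lemma closed_Ncl f S e : closed (Ncl f S e : set PT).
Proof.
have -> : Ncl f S e = (@dual_ball R W : set PT) `&` \bigcap_(w in S) [set g : PT | `|g w - f w| <= e].
  apply/seteqP; split => g; first by case=> h1 h2; split => // w /h2.
  by case=> h1 h2; split => // w Sw; exact: h2.
apply: closedI; first exact: closed_dual_ball.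
by apply: closed_bigI => w _; exact: closed_shift.
Qed.

Lemma ball_Box : (@dual_ball R W : set PT) `<=` Box.
Proof.
move=> f [_ h] w; rewrite /= in_itv /= -ler_norml; exact: h.
Qed.


Lemma finite_pos (S : set W) (h : W -> R) : finite_set S ->
  (forall w, S w -> 0 < h w) -> exists2 d, 0 < d & forall w, S w -> d <= h w.
Proof.
move=> /finite_seqP [s ->] {S}; elim: s => [|x s IH] hp.
  by exists 1 => // w /=; rewrite in_nil.
have [d d0 hd] : exists2 d, 0 < d & forall w, [set` s] w -> d <= h w.
  by apply: IH => w ws; apply: hp => /=; rewrite in_cons ws orbT.
have hx : 0 < h x by apply: hp => /=; rewrite in_cons eqxx.
exists (Num.min (h x) d); first by rewrite lt_min hx d0.
move=> w /=; rewrite in_cons => /orP[/eqP ->|ws]; first by rewrite ge_min lexx.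
by rewrite ge_min (hd w ws) orbT.
Qed.

Lemma Nbd_open f S e : finite_set S -> wstar_open (Nbd f S e).
Proof.
move=> fS; split; first by move=> g [].
move=> g [gb hg].
have [d d0 hd] := @finite_pos S (fun w => e - `|g w - f w|) fS
  (fun w Sw => ltac:(by rewrite subr_gt0; exact: hg)).
exists S, d; split=> //; split=> // k [kb hk]; split=> // w Sw.
have h1 := hk w Sw; have h2 := hd w Sw.
rewrite (_ : k w - f w = (k w - g w) + (g w - f w)); last by rewrite addrA subrK.
apply: (le_lt_trans (ler_normD _ _)); lra.
Qed.

Lemma open_common U V f : wstar_open U -> U f -> wstar_open V -> V f ->
  exists S e, [/\ finite_set S, 0 < e & Nbd f S e `<=` U `&` V].
Proof.
move=> [_ oU] Uf [_ oV] Vf.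
have [S1 [e1 [f1 [e10 s1]]]] := oU f Uf.
have [S2 [e2 [f2 [e20 s2]]]] := oV f Vf.
exists (S1 `|` S2), (Num.min e1 e2); split.
- by rewrite finite_setU.
- by rewrite lt_min e10 e20.
- move=> g [gb hg]; split.
    by apply: s1; split => // w Sw; apply: (lt_le_trans (hg w (or_introl Sw))); rewrite ge_min lexx.
  by apply: s2; split => // w Sw; apply: (lt_le_trans (hg w (or_intror Sw))); rewrite ge_min lexx orbT.
Qed.

Lemma Ncl_Nbd f S e : 0 < e -> Ncl f S (e / 2) `<=` Nbd f S e.
Proof.
move=> e0 g [gb hg]; split => // w Sw; apply: (le_lt_trans (hg w Sw)).
lra.
Qed.

Lemma Nbd_Ncl f S e : Nbd f S e `<=` Ncl f S e.
Proof. by move=> g [gb hg]; split => // w Sw; apply: ltW; exact: hg. Qed.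

Theorem open_not_meager (U : set (W -> R)) f :
  wstar_open U -> U f -> ~ wstar_first_category U.
Proof.
move=> oU Uf [_ [A [Anwd UA]]].
pose valid (x : (W -> R) * set W * R) := [/\ dual_ball x.1.1, finite_set x.1.2 & 0 < x.2].
pose O (x : (W -> R) * set W * R) := Nbd x.1.1 x.1.2 (x.2 / 2).
pose Cl (x : (W -> R) * set W * R) := Ncl x.1.1 x.1.2 (x.2 / 2).
have step : forall p : nat * ((W -> R) * set W * R), exists y,
    valid p.2 -> [/\ valid y, Cl y `<=` O p.2 & forall g, Cl y g -> ~ A p.1 g].
  move=> [n [[f0 S0] e0]]; rewrite /=.
  have [[vf0 vS0 ve0]|nv] := pselect (valid (f0, S0, e0)); last by exists (f0, S0, e0) => /nv.
  have oO : wstar_open (O (f0, S0, e0)) by exact: Nbd_open.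
  have Of0 : O (f0, S0, e0) f0.
    split => // w _; rewrite subrr normr0; lra.
  have [f' Of' ncl] : exists2 f', O (f0, S0, e0) f' & ~ wstar_closure (A n) f'.
    apply: contrapT => hn.
    have := (Anwd n).2; rewrite -subset0 => /(_ f0); apply.
    exists (O (f0, S0, e0)); split => //; split => // g Og.
    by apply: contrapT => ng; apply: hn; exists g.
  have bf' : dual_ball f' by case: Of'.
  have [U' [oU' U'f' dis]] : exists U', [/\ wstar_open U', U' f' & ~ (U' `&` A n !=set0)].
    apply: contrapT => hn; apply: ncl; split => // V oV Vf'.
    by apply: contrapT => hV; apply: hn; exists V; split.
  have [S [e [fS e0' sub]]] := open_common _ _ _ oO Of' oU' U'f'.
  exists (f', S, e) => _; split => //.
  - move=> g /(Ncl_Nbd _ _ _ e0') /sub [] //.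
  - move=> g /(Ncl_Nbd _ _ _ e0') /sub [_ U'g] Ag; apply: dis; exists g; split => //.
have [F HF] := choice step.
have [S0 [e0 [fS0 [e00 sU]]]] := oU.2 f Uf.
pose x0 := (f, S0, e0).
have vx0 : valid x0 by split => //; exact: oU.1.
pose fix xs n := if n is m.+1 then F (m, xs m) else x0.
have vxs : forall n, valid (xs n).
  by elim => [|n IH] //=; have [] := HF (n, xs n) IH.
pose C n := Cl (xs n).
have [p Cp] : exists p, forall n, C n p.
  apply: nested_pt.
  - by move=> n; exact: closed_Ncl.
  - move=> n; have [_ h _] := HF (n, xs n) (vxs n); apply: subset_trans h _.
    exact: Nbd_Ncl.
  - move=> n; exists (xs n).1.1; case: (vxs n) => b _ e; split => // w _.
    rewrite subrr normr0; lra.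
  - by move=> n; apply: subset_trans ball_Box; move=> g [].
have Up : U p.
  apply: sU; apply: (@Ncl_Nbd _ _ _ e00); exact: (Cp 0%N).
have [n _ Anp] := UA p Up.
have [_ _ h] := HF (n, xs n) (vxs n).
exact: (h p (Cp n.+1)).
Qed.


Definition negf (k : W -> R) : W -> R := fun w => - k w.

Lemma negfK k : negf (negf k) = k.
Proof. by apply: funext => w; rewrite /negf opprK. Qed.

Lemma ball_neg k : dual_ball k -> dual_ball (negf k).
Proof.
case=> kl kb; split => [a u v|w]; rewrite /negf; last by rewrite normrN.
by rewrite kl opprD mulrN.
Qed.

Definition negS (A : set (W -> R)) := [set k | A (negf k)].

Lemma negSK A : negS (negS A) = A.
Proof. by apply/seteqP; split => k; rewrite /negS /= negfK. Qed.

Lemma open_neg U : wstar_open U -> wstar_open (negS U).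
Proof.
case=> Ub oU; split; first by move=> k /Ub /ball_neg; rewrite negfK.
move=> f Uf; have [S [e [fS [e0 sub]]]] := oU _ Uf.
exists S, e; split => //; split => // g [gb hg]; apply: sub; split.
  exact: ball_neg.
by move=> w Sw; rewrite /negf -opprD normrN; exact: hg.
Qed.

Lemma closure_neg A k : wstar_closure (negS A) k -> wstar_closure A (negf k).
Proof.
case=> kb hk; split; first exact: ball_neg.
move=> U oU Uk; have := hk (negS U) (open_neg _ oU) Uk.
by case=> g [Ug Ag]; exists (negf g).
Qed.

Lemma nwd_neg (A : set (W -> R)) : wstar_nowhere_dense A -> wstar_nowhere_dense (negS A).
Proof.
case=> Ab Ai; split; first by move=> k /Ab /ball_neg; rewrite negfK.
rewrite -subset0 => f [V [oV [Vf sV]]].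
have : wstar_interior (wstar_closure A) (negf f).
  exists (negS V); split; first exact: (open_neg _ oV).
  split; first by rewrite /negS /= negfK.
  move=> g Vg; rewrite -(negfK g); apply: closure_neg; exact: sV.
by rewrite Ai.
Qed.

Lemma meager_neg (A : set (W -> R)) : wstar_first_category A -> wstar_first_category (negS A).
Proof.
case=> Ab [An [Anw sA]]; split; first by move=> k /Ab /ball_neg; rewrite negfK.
exists (fun n => negS (An n)); split; first by move=> n; exact: nwd_neg.
by move=> k /sA [n _ h]; exists n.
Qed.

Lemma meager_U (A B : set (W -> R)) : wstar_first_category A -> wstar_first_category B ->
  wstar_first_category (A `|` B).
Proof.
case=> Ab [An [Anw sA]] [Bb [Bn [Bnw sB]]]; split; first by move=> k [/Ab|/Bb].
exists (fun n => if odd n then Bn n./2 else An n./2); split.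
  by move=> n; case: (odd n).
move=> k [/sA [n _ h]|/sB [n _ h]].
  by exists n.*2 => //; rewrite odd_double doubleK.
by exists n.*2.+1 => //=; rewrite odd_double /= uphalf_double.
Qed.

Lemma meager_sub (A B : set (W -> R)) : A `<=` B -> wstar_first_category B -> wstar_first_category A.
Proof.
move=> AB [Bb [Bn [Bnw sB]]]; split; first exact: subset_trans Bb.
by exists Bn; split => //; apply: subset_trans sB.
Qed.

Lemma second_pick (B M : set (W -> R)) : wstar_second_category B ->
  wstar_first_category M -> exists k, [/\ B k, ~ M k & ~ M (negf k)].
Proof.
case=> Bb Bnm Mm; apply: contrapT => hn; apply: Bnm.
apply: (@meager_sub _ (M `|` negS M)); last by apply: meager_U => //; exact: meager_neg.
move=> k Bk; apply: contrapT => hk; apply: hn; exists k; split => //.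
  by move=> Mk; apply: hk; left.
by move=> Mk; apply: hk; right.
Qed.

End Top.


Section Aux.
Variable R : realType.

Lemma quot_norm_ge0 (Y Z : normedModType R) (iZ : Y -> Z) z : 0 <= quot_norm iZ z.
Proof.
apply: lb_le_inf; first by exists `|z - iZ 0|, 0.
by move=> _ [y _ <-].
Qed.

Lemma quot_norm_le (Y Z : normedModType R) (iZ : Y -> Z) z y : quot_norm iZ z <= `|z - iZ y|.
Proof.
apply: ge_inf; last by exists y.
by exists 0 => _ [y' _ <-].
Qed.

Lemma quot_functional (Y Z : normedModType R) (iZ : {linear Y -> Z}) (z0 : Z) :
  exists psi : Z -> R, [/\ (forall a u v, psi (a *: u + v) = a * psi u + psi v),
    (forall y, psi (iZ y) = 0), psi z0 = quot_norm iZ z0 &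
    (forall u, `|psi u| <= quot_norm iZ u)].
Proof.
set q := quot_norm iZ z0.
have q0 : 0 <= q by exact: quot_norm_ge0.
pose T (p : (Y * R^o)%type) : Z := iZ p.1 + p.2 *: z0.
pose g (p : (Y * R^o)%type) : R := p.2 * q.
have H1 : forall a u v, T (a *: u + v) = a *: T u + T v.
  move=> a [u1 t1] [u2 t2]; rewrite /T /= linearD linearZ /=.
  have e : (a *: t1) *: z0 = a *: (t1 *: z0) by rewrite scalerA.
  by rewrite scalerDl scalerDr e addrACA.
have H2 : forall a u v, g (a *: u + v) = a * g u + g v.
  by move=> a [u1 t1] [u2 t2]; rewrite /g /= -[a *: t1]/(a * t1); ring.
have H3 : forall v, g v <= `|T v|.
  move=> [y t]; rewrite /T /g /=.
  have [t0|t0] := leP t 0.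
    by apply: (le_trans _ (normr_ge0 _)); rewrite mulr_le0_ge0.
  have -> : iZ y + t *: z0 = t *: (z0 - iZ ((- t^-1) *: y)).
    rewrite linearZ /= scalerBr scalerA mulrN mulfV ?gt_eqF // scaleN1r opprK.
    by rewrite addrC.
  rewrite normrZ gtr0_norm // ler_pM2l //; exact: quot_norm_le.
have [L [Llin [LT Lb]]] := @HahnBanach R Z (Y * R^o)%type T g H1 H2 H3.
have Lneg : forall u y, L (u - iZ y) = L u.
  move=> u y; have := Llin (-1) (iZ y) u.
  have := LT (y, 0); rewrite /T /g /= scale0r addr0 mul0r => ->.
  by rewrite scaleN1r addrC mulr0 add0r.
exists L; split => //.
- by move=> y; have := LT (y, 0); rewrite /T /g /= scale0r addr0 mul0r.
- by have := LT (0, 1); rewrite /T /g /= linear0 add0r scale1r mul1r.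
- move=> u; apply: lb_le_inf; first by exists `|u - iZ 0|, 0.
  by move=> _ [y _ <-]; rewrite -(Lneg u y); exact: Lb.
Qed.

Section Wsec.
Variable W : normedModType R.
Local Notation ball := (@dual_ball R W).

Lemma norming (w : W) : exists h, ball h /\ h w = `|w|.
Proof.
pose T (t : R^o) : W := t *: w.
pose g (t : R^o) : R := t * `|w|.
have H1 : forall a u v, T (a *: u + v) = a *: T u + T v.
  by move=> a u v; rewrite /T scalerDl scalerA.
have H2 : forall a u v, g (a *: u + v) = a * g u + g v.
  by move=> a u v; rewrite /g -[a *: u]/(a * u); ring.
have H3 : forall v, g v <= `|T v|.
  by move=> v; rewrite /g /T normrZ ler_wpM2r // real_ler_norm // num_real.
have [L [Llin [LT Lb]]] := @HahnBanach R W R^o T g H1 H2 H3.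
exists L; split; first by split.
by have := LT 1; rewrite /T /g scale1r mul1r.
Qed.

Lemma zero_ball : ball (fun _ => 0).
Proof. by split => [a u v|w]; rewrite ?mulr0 ?addr0 ?normr0. Qed.

Lemma empty_first : wstar_first_category (@set0 (W -> R)).
Proof.
split; first exact: sub0set.
exists (fun _ => set0); split => // n; split; first exact: sub0set.
rewrite -subset0 => f [U [oU [Uf sU]]].
have [fb hf] := sU f Uf.
have oB : wstar_open ball.
  split => // g gb; exists set0, 1; split; first exact: finite_set0.
  by split => // k [].
have := hf _ oB fb.
by case=> k [].
Qed.

Lemma mK0 (f : (W -> R) -> R) : (forall k, ball k -> f k = 0) -> mK f.
Proof.
move=> h; split; first by exists 0 => k /h ->; rewrite normr0.
apply: (@meager_sub R W _ set0); last exact: empty_first.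
by move=> k [kb]; rewrite h // eqxx.
Qed.

Lemma Ksup_ge0 (f : (W -> R) -> R) : 0 <= Ksupnorm f.
Proof.
rewrite /Ksupnorm.
have [hs|hs] := pselect (has_ubound [set `|f k| | k in ball]).
  apply: le_trans (normr_ge0 (f (fun _ => 0))) _.
  by apply: ub_le_sup => //; exists (fun _ => 0) => //; exact: zero_ball.
by rewrite sup_out // => -[].
Qed.

Lemma Ksup_ub (f : (W -> R) -> R) k : Kbounded f -> ball k -> `|f k| <= Ksupnorm f.
Proof.
move=> [M hM] kb; apply: ub_le_sup; last by exists k.
by exists M => _ [k' k'b <-]; exact: hM.
Qed.

Lemma Ksup_le (f : (W -> R) -> R) M : (forall k, ball k -> `|f k| <= M) -> Ksupnorm f <= M.
Proof.
move=> hM; apply: ge_sup; first by exists `|f (fun _ => 0)|, (fun _ => 0) => //; exact: zero_ball.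
by move=> _ [k kb <-]; exact: hM.
Qed.

Lemma KboundedB (f g : (W -> R) -> R) : Kbounded f -> Kbounded g -> Kbounded (f \- g).
Proof.
move=> [M1 h1] [M2 h2]; exists (M1 + M2) => k kb /=.
by apply: le_trans (ler_normB _ _) _; apply: lerD; [exact: h1|exact: h2].
Qed.

Lemma m0_ge0 (f : (W -> R) -> R) : 0 <= m0norm f.
Proof.
apply: lb_le_inf.
  by exists (Ksupnorm (f \- (fun _ => 0))), (fun _ => 0) => //; apply: mK0.
by move=> _ [g _ <-]; exact: Ksup_ge0.
Qed.

Lemma m0_ub (f : (W -> R) -> R) M : (forall k, ball k -> `|f k| <= M) -> m0norm f <= M.
Proof.
move=> hM; apply: (@le_trans _ _ (Ksupnorm (f \- (fun _ => 0)))).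
  apply: ge_inf; last by exists (fun _ => 0) => //; apply: mK0.
  by exists 0 => _ [g _ <-]; exact: Ksup_ge0.
by apply: Ksup_le => k kb /=; rewrite subr0; exact: hM.
Qed.

Lemma m0_lb (f : (W -> R) -> R) c : Kbounded f ->
  (forall g, mK g -> exists k, ball k /\ c <= `|f k - g k|) -> c <= m0norm f.
Proof.
move=> fb h; apply: lb_le_inf.
  by exists (Ksupnorm (f \- (fun _ => 0))), (fun _ => 0) => //; apply: mK0.
move=> _ [g mg <-]; have [k [kb hk]] := h g mg.
apply: le_trans hk _.
by have := @Ksup_ub (f \- g) k (KboundedB _ _ fb mg.1) kb.
Qed.

End Wsec.

End Aux.

Arguments m0_ge0 {R W}.
Arguments m0_ub {R W}.
Arguments m0_lb {R W}.
Arguments mK0 {R W}.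

Lemma card_surj (I : Type) (Z : Type) (D : set Z) :
  ([set: I] #= D)%card -> exists da : I -> Z, forall d, D d -> exists a, da a = d.
Proof.
move=> /card_eqP [f].
pose da (a : I) : Z := val (f (@exist _ _ a (in_setT a))).
exists da => d Dd.
have := (@surj _ _ _ _ f) (@exist _ _ d (mem_set Dd)) Logic.I.
case=> x _ fx; exists (val x); rewrite /da.
have -> : @exist _ _ (val x) (in_setT (val x)) = x by apply: val_inj.
by rewrite fx.
Qed.

Theorem mainTheorem11 (R : realType)
  (Y Z W : completeNormedModType R)
  (iZ : {linear Y -> Z}) (iW : {linear Y -> W})
  (iZ_isom : forall y : Y, `|iZ y| = `|y|)
  (iW_isom : forall y : Y, `|iW y| = `|y|)
  (D : set Z) (hD : quot_dens_witness iZ D)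
  (I : Type) (B : I -> set (W -> R))
  (hI : ([set: I] #= D)%card)
  (hB2 : forall a, wstar_second_category (B a))
  (hBdisj : forall a b, a <> b -> B a `&` B b = set0)
  (hBsym : forall a : I, forall b : I, forall f, B a f -> ~ B b (fun w => - f w)) :
  exists E : Z -> (W -> R) -> R,
    (forall z, Kbounded (E z)) /\
    (* linear as a map into m_0(K) *)
    (forall (a : R) (z1 z2 : Z),
        mK (E (a *: z1 + z2) \- (fun k => a * E z1 k + E z2 k))) /\
    (* isomorphic embedding *)
    (exists c C : R, 0 < c /\ 0 < C /\
       forall z, c * `|z| <= m0norm (E z) /\ m0norm (E z) <= C * `|z|) /\
    (* coincides on Y with the natural embedding y |-> [w* |-> w*(y)] *)
    (forall y : Y, mK (E (iZ y) \- (fun k => k (iW y)))).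
Proof.
pose ball := @dual_ball R W.
pose ng := @negf R W.
have iZlin : forall a u v, iZ (a *: u + v) = a *: iZ u + iZ v.
  by move=> a u v; rewrite linearD linearZ.
have iWlin : forall a u v, iW (a *: u + v) = a *: iW u + iW v.
  by move=> a u v; rewrite linearD linearZ.
have hex : forall k, exists L : Z -> R, ball k ->
   [/\ (forall a u v, L (a *: u + v) = a * L u + L v),
       (forall y, L (iZ y) = k (iW y)) & (forall z, `|L z| <= `|z|)].
  move=> k.
  have [kb|nkb] := pselect (ball k); last by exists (fun _ => 0) => /nkb.
  have g1 : forall a u v, k (iW (a *: u + v)) = a * k (iW u) + k (iW v).
    by move=> a u v; rewrite iWlin; exact: kb.1.
  have g2 : forall v, k (iW v) <= `|iZ v|.
    move=> v; rewrite iZ_isom -(iW_isom v).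
    exact: le_trans (real_ler_norm (num_real _)) (kb.2 _).
  have [L [L1 [L2 L3]]] := @HahnBanach R Z Y iZ (fun y => k (iW y)) iZlin g1 g2.
  by exists L.
have [Lf HL] := choice hex.
have [psi Hpsi] := choice (fun z0 => @quot_functional R Y Z iZ z0).
have [da dasurj] := card_surj _ _ _ hI.
have [idx Hidx] := choice (fun k : W -> R => (ltac:(
  have [[a Ha]|Hn] := pselect (exists a, B a k);
  [exact: (ex_intro _ (Some a) Ha) | exact: (ex_intro _ None Hn)]) :
  exists o : option I, match o with Some a => B a k | None => ~ exists a, B a k end)).
have Ecase : forall k, (exists a, idx k = Some a /\ B a k) \/
                       (idx k = None /\ ~ exists a, B a k).
  move=> k; have := Hidx k; case: (idx k) => [a Ha|Hn]; [left; exists a|right] => //.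
pose E (z : Z) (k : W -> R) : R := match idx k with
  | Some a => Lf k z + psi (da a) z
  | None => match idx (ng k) with
            | Some a => - Lf (ng k) z + psi (da a) z
            | None => Lf k z end end.

have kB : forall a k, B a k -> ball k by move=> a k /((hB2 a).1).
have ngK : forall k, ng (ng k) = k by move=> k; exact: negfK.
have ngb : forall k, ball k -> ball (ng k) by move=> k; exact: ball_neg.
have idxB : forall a k, B a k -> idx k = Some a.
  move=> a k Bk; have [[b [-> Hb]]|[_ Hn]] := Ecase k; last by exfalso; apply: Hn; exists a.
  have [->//|nab] := pselect (b = a).
  by have := hBdisj _ _ nab; rewrite -subset0 => /(_ k); case.
have idxN : forall a k, B a k -> idx (ng k) = None.
  move=> a k Bk; have [[b [_ Hb]]|[-> //]] := Ecase (ng k).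
  by exfalso; exact: (hBsym a b k Bk Hb).
have psi_lin : forall d a u v, psi d (a *: u + v) = a * psi d u + psi d v.
  by move=> d; case: (Hpsi d).
have psi_Y : forall d y, psi d (iZ y) = 0 by move=> d; case: (Hpsi d).
have psi_b : forall d u, `|psi d u| <= `|u|.
  move=> d u; case: (Hpsi d) => _ _ _ h; apply: le_trans (h u) _.
  by have := @quot_norm_le R Y Z iZ u 0; rewrite linear0 subr0.
have E1 : forall k, ball k -> forall a z1 z2, E (a *: z1 + z2) k = a * E z1 k + E z2 k.
  move=> k kb a z1 z2; rewrite /E.
  have [[b [-> Hb]]|[-> Hn]] := Ecase k.
    by case: (HL k kb) => l1 _ _; rewrite l1 psi_lin; ring.
  have [[b [-> Hb]]|[-> Hn2]] := Ecase (ng k).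
    by case: (HL (ng k) (kB _ _ Hb)) => l1 _ _; rewrite l1 psi_lin; ring.
  by case: (HL k kb) => l1 _ _; rewrite l1.
have E2 : forall k z, ball k -> `|E z k| <= 2 * `|z|.
  move=> k z kb; rewrite /E mulr2n mulrDl mul1r.
  have [[b [-> Hb]]|[-> Hn]] := Ecase k.
    case: (HL k kb) => _ _ l3; apply: le_trans (ler_normD _ _) _.
    by apply: lerD; [exact: l3|exact: psi_b].
  have [[b [-> Hb]]|[-> Hn2]] := Ecase (ng k).
    case: (HL (ng k) (kB _ _ Hb)) => _ _ l3; apply: le_trans (ler_normD _ _) _.
    by apply: lerD; [rewrite normrN; exact: l3|exact: psi_b].
  case: (HL k kb) => _ _ l3; apply: le_trans (l3 z) _.
  by rewrite lerDl.
have E3 : forall k y, ball k -> E (iZ y) k = k (iW y).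
  move=> k y kb; rewrite /E.
  have [[b [-> Hb]]|[-> Hn]] := Ecase k.
    by case: (HL k kb) => _ l2 _; rewrite l2 psi_Y addr0.
  have [[b [-> Hb]]|[-> Hn2]] := Ecase (ng k).
    by case: (HL (ng k) (kB _ _ Hb)) => _ l2 _; rewrite l2 psi_Y addr0 /ng /negf opprK.
  by case: (HL k kb) => _ l2 _; rewrite l2.
have E4 : forall a k z, B a k -> E z k + E z (ng k) = 2 * psi (da a) z.
  move=> a k z Bk; rewrite /E (idxB _ _ Bk) (idxN _ _ Bk) ngK (idxB _ _ Bk).
  by ring.

have Eb : forall z, Kbounded (E z) by move=> z; exists (2 * `|z|) => k kb; exact: E2.
have g0 : forall (g : (W -> R) -> R) k, ball k -> ~ Ksupport g k -> g k = 0.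
  move=> g k kb nk; apply/eqP; apply: contrapT => h; apply: nk; split => //.
  by apply/negP.
have Qb : forall z, quot_norm iZ z / 2 <= m0norm (E z).
  move=> z; set q := quot_norm iZ z.
  have [q0|q0] := leP q 0.
    by apply: le_trans (m0_ge0 _); rewrite pmulr_lle0.
  have e0 : 0 < q / 4 by rewrite divr_gt0.
  have [d Dd hd] := hD.1 z (q / 4) e0.
  have [a dae] := dasurj d Dd.
  have h1 : q <= quot_norm iZ d + quot_norm iZ (z - d).
    case: (Hpsi z) => l1 _ l3 l4.
    have : psi z z = psi z d + psi z (z - d).
      by rewrite -[psi z d]mul1r -l1 scale1r addrC subrK.
    move=> e; rewrite /q -l3 e; apply: le_trans (real_ler_norm (num_real _)) _.
    by apply: le_trans (ler_normD _ _) _; apply: lerD; exact: l4.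
  have h2 : quot_norm iZ d - quot_norm iZ (z - d) <= psi (da a) z.
    rewrite dae; case: (Hpsi d) => l1 _ l3 l4.
    have -> : psi d z = psi d d + psi d (z - d).
      by rewrite -[psi d d]mul1r -l1 scale1r addrC subrK.
    rewrite l3 lerD2l lerNl; apply: le_trans (real_ler_norm (num_real _)) _.
    by rewrite normrN; exact: l4.
  have hP : q / 2 <= psi (da a) z.
    have := hd; move: h1 h2; set qd := quot_norm iZ d; set qe := quot_norm iZ (z - d).
    move=> h1 h2 h3; lra.
  apply: m0_lb; first exact: Eb.
  move=> g [gb gm].
  have [k [Bk nk nnk]] := @second_pick R W (B a) (Ksupport g) (hB2 a) gm.
  have kb := kB _ _ Bk.
  have gk : g k = 0 by exact: g0.
  have gnk : g (ng k) = 0 by apply: g0 => //; exact: ngb.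
  have s4 := E4 a k z Bk.
  have [hk|hk] := leP (q / 2) `|E z k|.
    by exists k; split => //; rewrite gk subr0.
  exists (ng k); split; first exact: ngb.
  rewrite gnk subr0; apply: le_trans (real_ler_norm (num_real _)).
  have := real_ler_norm (num_real (E z k)); lra.
have Yb : forall z y, `|y| / 2 - 2 * `|z - iZ y| <= m0norm (E z).
  move=> z y; have [->|y0] := eqVneq y 0.
    apply: le_trans (m0_ge0 _); rewrite normr0 mul0r add0r oppr_le0.
    by rewrite mulr_ge0.
  have ny : 0 < `|y| by rewrite normr_gt0.
  have [h [hb hy]] := @norming R W (iW y).
  pose O := [set k | ball k /\ `|y| / 2 < k (iW y)].
  have oO : wstar_open O.
    split; first by move=> k [].
    move=> f [fb fy]; exists [set iW y], (f (iW y) - `|y| / 2); split.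
      exact: finite_set1.
    split; first by rewrite subr_gt0.
    move=> g [gb hg]; split => //; have := hg (iW y) erefl.
    rewrite ltr_norml => /andP [l1 l2]; lra.
  have Oh : O h by split => //; rewrite hy iW_isom; lra.
  have nm := @open_not_meager R W O h oO Oh.
  apply: m0_lb; first exact: Eb.
  move=> g [gb gm].
  have [k Ok nk] : exists2 k, O k & ~ Ksupport g k.
    apply: contrapT => hn; apply: nm; apply: (@meager_sub R W O (Ksupport g)) => // k Ok.
    by apply: contrapT => nk; apply: hn; exists k.
  have kb : ball k by case: Ok.
  exists k; split => //; rewrite (g0 g k kb nk) subr0.
  have ez : E z k = E (iZ y) k + E (z - iZ y) k.
    by rewrite -[E (iZ y) k]mul1r -E1 // scale1r addrC subrK.
  rewrite ez E3 //.
  have := E2 k (z - iZ y) kb; rewrite ler_norml => /andP [l1 _].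
  case: Ok => _ l3.
  apply: le_trans (real_ler_norm (num_real _)); lra.
exists E; split; first exact: Eb.
split.
  by move=> a z1 z2; apply: mK0 => k kb /=; rewrite E1 // subrr.
split; last by move=> y; apply: mK0 => k kb /=; rewrite E3 // subrr.
exists (20^-1), 2; split => //; split => // z; split; last first.
  by apply: m0_ub => k kb; exact: E2.
set n := `|z|.
have [qb|qb] := leP (n / 10) (quot_norm iZ z).
  apply: le_trans (Qb z); lra.
have [x [y _ <-] xl] := @inf_lt R _ _ (ex_intro _ `|z - iZ 0| (ex_intro2 _ _ 0 Logic.I erefl)) qb.
have ty : n <= `|y| + `|z - iZ y|.
  rewrite /n -(iZ_isom y); apply: le_trans (ler_normD _ _).
  by rewrite addrC subrK.
have n0 : 0 <= n by exact: normr_ge0.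
have := Yb z y; lra.
Qed.
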